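(* Identify the dual group of $\mathbb{T}^2$ with $\mathbb{Z}^2$ and let $K = \bigcup_{n=1}^\infty \{n\} \times \{-n,\dots,n\} \subset \mathbb{Z}^2$. Then $K$ is strictly positive definite, while the set $K_1 = \{\gamma \in \mathbb{Z} : \{\omega \in \mathbb{Z} : (\gamma,\omega) \in K\} \text{ is strictly positive definite in } \mathbb{Z}\}$ is empty.
   Context: $\mathbb{Z}^r$ is regarded as the dual group of $\mathbb{T}^r$ ($\mathbb{T}$ the complex numbers of modulus one) via $\gamma(z) = \prod_{k=1}^r z_k^{\gamma_k}$. A trigonometric polynomial on $\mathbb{Z}^r$ is a function of the form $\gamma \mapsto \sum_{i=1}^n c_i \gamma(x_i)$ with $x_i \in \mathbb{T}^r$, $c_i \in \mathbb{C}$. A subset $K \subset \mathbb{Z}^r$ is strictly positive definite if the only trigonometric polynomial vanishing at every point of $K$ is the identically zero function. *)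

(* Defs.v *)
From Stdlib Require Import Reals ZArith.
Open Scope R_scope.

Record C := mkC { Cre : R ; Cim : R }.

Definition C0 : C := mkC 0 0.
Definition C1 : C := mkC 1 0.
Definition Cadd (z w : C) : C := mkC (Cre z + Cre w) (Cim z + Cim w).
Definition Cmul (z w : C) : C :=
  mkC (Cre z * Cre w - Cim z * Cim w) (Cre z * Cim w + Cim z * Cre w).
Definition Cnorm2 (z : C) : R := Cre z * Cre z + Cim z * Cim z.
Definition Cinv (z : C) : C := mkC (Cre z / Cnorm2 z) (- Cim z / Cnorm2 z).

Fixpoint Cpow (z : C) (n : nat) : C :=
  match n with O => C1 | S m => Cmul z (Cpow z m) end.

(** Integer powers z^k, k : Z (used for z of modulus one, so z <> 0). *)
Definition Czpow (z : C) (k : Z) : C :=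
  match k with
  | Z0 => C1
  | Zpos p => Cpow z (Pos.to_nat p)
  | Zneg p => Cpow (Cinv z) (Pos.to_nat p)
  end.

Definition in_T (z : C) : Prop := Cnorm2 z = 1.

Fixpoint Csum (n : nat) (f : nat -> C) : C :=
  match n with O => C0 | S m => Cadd (Csum m f) (f m) end.
Fixpoint Cprod (n : nat) (f : nat -> C) : C :=
  match n with O => C1 | S m => Cmul (Cprod m f) (f m) end.

(** Elements of Z^r are represented by gamma : nat -> Z (only the
    coordinates 0..r-1 are used), points of T^r by x : nat -> C with
    x k in T for k < r. *)

Definition character (r : nat) (gamma : nat -> Z) (x : nat -> C) : C :=
  Cprod r (fun k => Czpow (x k) (gamma k)).

Definition in_Tr (r : nat) (x : nat -> C) : Prop :=
  forall k, (k < r)%nat -> in_T (x k).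

Definition trig_poly (r n : nat) (c : nat -> C) (x : nat -> nat -> C)
  (gamma : nat -> Z) : C :=
  Csum n (fun i => Cmul (c i) (character r gamma (x i))).

Definition strictly_pos_def (r : nat) (K : (nat -> Z) -> Prop) : Prop :=
  forall (n : nat) (c : nat -> C) (x : nat -> nat -> C),
    (forall i, (i < n)%nat -> in_Tr r (x i)) ->
    (forall gamma, K gamma -> trig_poly r n c x gamma = C0) ->
    forall gamma, trig_poly r n c x gamma = C0.

Definition K_set (gamma : nat -> Z) : Prop :=
  (1 <= gamma 0%nat)%Z /\ (- gamma 0%nat <= gamma 1%nat <= gamma 0%nat)%Z.

Definition pairZ (g w : Z) : nat -> Z :=
  fun k => match k with O => g | S O => w | _ => 0%Z end.

(** K_1 = { g in Z : { w in Z : (g,w) in K } is strictly positive definite in Z }.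
    Subsets of Z = Z^1 are predicates on v : nat -> Z through v 0. *)
Definition K1_set (g : Z) : Prop :=
  strictly_pos_def 1 (fun v => K_set (pairZ g (v 0%nat))).

(* Main.v *)
Require Import Defs.
From Stdlib Require Import Reals ZArith Lia Lra Psatz.
Open Scope R_scope.
Import Defs.

Definition Copp (z : C) : C := mkC (- Cre z) (- Cim z).
Definition Csub (z w : C) : C := Cadd z (Copp w).

Lemma Ceq (z w : C) : Cre z = Cre w -> Cim z = Cim w -> z = w.
Proof. destruct z, w; simpl; intros; subst; reflexivity. Qed.

Lemma Cring : ring_theory C0 C1 Cadd Cmul Csub Copp (@eq C).
Proof.
  constructor; intros; apply Ceq; destruct x; try destruct y; try destruct z;
  unfold Cadd, Cmul, Csub, Copp, C0, C1; simpl; ring.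
Qed.
Add Ring Cring : Cring.

Lemma Cinv_l (z : C) : in_T z -> Cmul (Cinv z) z = C1.
Proof.
  unfold in_T, Cinv; intro H; rewrite H; destruct z as [a b]; unfold Cnorm2 in H;
  simpl in *; apply Ceq; simpl; unfold Rdiv; rewrite Rinv_1; lra.
Qed.

Lemma Cmul_T_zero (a w : C) : in_T a -> Cmul a w = C0 -> w = C0.
Proof.
  intros Ha H.
  transitivity (Cmul (Cmul (Cinv a) a) w). rewrite Cinv_l by auto; ring.
  transitivity (Cmul (Cinv a) (Cmul a w)). ring. rewrite H; ring.
Qed.

Lemma Czpow_succ (z : C) (k : Z) : in_T z -> Czpow z (Z.succ k) = Cmul z (Czpow z k).
Proof.
  intro Hz. destruct k as [|p|p].
  - simpl. ring.
  - replace (Z.succ (Z.pos p)) with (Z.pos (Pos.succ p)) by lia.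
    unfold Czpow. rewrite Pos2Nat.inj_succ. reflexivity.
  - destruct (Pos.succ_pred_or p) as [->|Hp].
    + simpl. transitivity (Cmul (Cmul (Cinv z) z) C1). rewrite Cinv_l by auto. ring. ring.
    + rewrite <- Hp. replace (Z.succ (Z.neg (Pos.succ (Pos.pred p)))) with (Z.neg (Pos.pred p)) by lia.
      unfold Czpow. rewrite Pos2Nat.inj_succ. simpl Cpow.
      transitivity (Cmul (Cmul (Cinv z) z) (Cpow (Cinv z) (Pos.to_nat (Pos.pred p)))).
      rewrite Cinv_l by auto. ring. ring.
Qed.

Lemma Csum_ext_lt (n : nat) (f g : nat -> C) :
  (forall i, (i < n)%nat -> f i = g i) -> Csum n f = Csum n g.
Proof.
  induction n; intros H; simpl. reflexivity.
  rewrite IHn by (intros; apply H; lia). rewrite H by lia. reflexivity.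
Qed.

Lemma Csum_lin (n : nat) (f g : nat -> C) (a : C) :
  Csum n (fun i => Csub (f i) (Cmul a (g i))) = Csub (Csum n f) (Cmul a (Csum n g)).
Proof. induction n; simpl. ring. rewrite IHn. ring. Qed.

Definition u (m : nat) (d z : nat -> C) (k : Z) : C :=
  Csum m (fun i => Cmul (d i) (Czpow (z i) k)).

Lemma vanish : forall m d z, (forall i, (i < m)%nat -> in_T (z i)) ->
  forall k0, (forall j, (j < m)%nat -> u m d z (k0 + Z.of_nat j) = C0) ->
  forall k, u m d z k = C0.
Proof.
  induction m as [|m IHm]; intros d z Hz k0 H k.
  - reflexivity.
  - set (d' := fun i => Cmul (d i) (Csub (z i) (z m))).
    assert (Hrel : forall k, u m d' z k =
      Csub (u (S m) d z (Z.succ k)) (Cmul (z m) (u (S m) d z k))).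
    { intro k'. unfold u. cbn [Csum].
      rewrite (Czpow_succ (z m)) by (apply Hz; lia).
      rewrite (Csum_ext_lt m (fun i => Cmul (d i) (Czpow (z i) (Z.succ k')))
        (fun i => Cmul (d i) (Cmul (z i) (Czpow (z i) k'))))
        by (intros; rewrite Czpow_succ by (apply Hz; lia); reflexivity).
      rewrite (Csum_ext_lt m (fun i => Cmul (d' i) (Czpow (z i) k'))
        (fun i => Csub (Cmul (d i) (Cmul (z i) (Czpow (z i) k')))
                       (Cmul (z m) (Cmul (d i) (Czpow (z i) k')))))
        by (intros; unfold d'; ring).
      rewrite Csum_lin. ring. }
    assert (Hv : forall k, u m d' z k = C0).
    { apply (IHm d' z) with (k0 := k0).
      - intros; apply Hz; lia.
      - intros j Hj. rewrite Hrel.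
        replace (Z.succ (k0 + Z.of_nat j)) with (k0 + Z.of_nat (S j))%Z by lia.
        rewrite !H by lia. ring. }
    assert (Hs : forall k, u (S m) d z (Z.succ k) = Cmul (z m) (u (S m) d z k)).
    { intro k'. specialize (Hv k'). rewrite Hrel in Hv.
      transitivity (Cadd (Csub (u (S m) d z (Z.succ k')) (Cmul (z m) (u (S m) d z k')))
                         (Cmul (z m) (u (S m) d z k'))). ring.
      rewrite Hv. ring. }
    assert (H0 : u (S m) d z k0 = C0).
    { specialize (H 0%nat). rewrite Z.add_0_r in H. apply H; lia. }
    assert (Hf : forall t : nat, u (S m) d z (k0 + Z.of_nat t) = C0).
    { induction t. rewrite Z.add_0_r; auto.
      replace (k0 + Z.of_nat (S t))%Z with (Z.succ (k0 + Z.of_nat t)) by lia.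
      rewrite Hs, IHt. ring. }
    assert (Hb : forall t : nat, u (S m) d z (k0 - Z.of_nat t) = C0).
    { induction t. rewrite Z.sub_0_r; auto.
      apply (Cmul_T_zero (z m)). apply Hz; lia. rewrite <- Hs.
      replace (Z.succ (k0 - Z.of_nat (S t))) with (k0 - Z.of_nat t)%Z by lia. auto. }
    destruct (Z_le_gt_dec k0 k).
    + replace k with (k0 + Z.of_nat (Z.to_nat (k - k0)))%Z by lia. apply Hf.
    + replace k with (k0 - Z.of_nat (Z.to_nat (k0 - k)))%Z by lia. apply Hb.
Qed.

Lemma part1 : strictly_pos_def 2 K_set.
Proof.
  intros n c x Hx HK gamma.
  set (F := fun p q => Csum n (fun i => Cmul (c i)
     (Cmul (Cmul C1 (Czpow (x i 0%nat) p)) (Czpow (x i 1%nat) q)))).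
  change (F (gamma 0%nat) (gamma 1%nat) = C0).
  assert (HFq : forall p q, F p q = u n (fun i => Cmul (c i) (Czpow (x i 0%nat) p))
                                     (fun i => x i 1%nat) q).
  { intros; unfold F, u; apply Csum_ext_lt; intros; ring. }
  assert (HFp : forall p q, F p q = u n (fun i => Cmul (c i) (Czpow (x i 1%nat) q))
                                     (fun i => x i 0%nat) p).
  { intros; unfold F, u; apply Csum_ext_lt; intros; ring. }
  assert (HA : forall j, (j < n)%nat -> forall q, F (Z.of_nat (n + 1 + j)) q = C0).
  { intros j Hj q. rewrite HFq. apply vanish with (k0 := 0%Z).
    - intros i Hi. apply (Hx i Hi 1%nat). lia.
    - intros j' Hj'. rewrite <- HFq.
      change (trig_poly 2 n c x (pairZ (Z.of_nat (n + 1 + j)) (0 + Z.of_nat j')) = C0).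
      apply HK. unfold K_set, pairZ. lia. }
  rewrite HFp. apply vanish with (k0 := Z.of_nat (n + 1)).
  - intros i Hi. apply (Hx i Hi 0%nat). lia.
  - intros j Hj. rewrite <- HFp.
    replace (Z.of_nat (n + 1) + Z.of_nat j)%Z with (Z.of_nat (n + 1 + j)) by lia.
    apply HA; auto.
Qed.

Definition cis (t : R) : C := mkC (cos t) (sin t).

Lemma cis_mul a b : Cmul (cis a) (cis b) = cis (a + b).
Proof. unfold cis, Cmul; simpl. rewrite cos_plus, sin_plus. f_equal; ring. Qed.

Lemma cis_T t : in_T (cis t).
Proof. unfold in_T, Cnorm2, cis; simpl. pose proof (sin2_cos2 t). unfold Rsqr in H. lra. Qed.

Lemma cis_inv t : Cinv (cis t) = cis (- t).
Proof.
  unfold Cinv. pose proof (cis_T t) as H; unfold in_T in H; rewrite H.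
  unfold cis; simpl. rewrite cos_neg, sin_neg. unfold Rdiv; rewrite Rinv_1. f_equal; ring.
Qed.

Lemma cis0 t : cis (0 * t) = C1.
Proof. rewrite Rmult_0_l. unfold cis, C1. rewrite cos_0, sin_0. reflexivity. Qed.

Lemma Cpow_cis n t : Cpow (cis t) n = cis (INR n * t).
Proof.
  induction n; simpl Cpow. simpl INR. rewrite cis0; reflexivity.
  rewrite IHn, cis_mul. f_equal. rewrite S_INR. ring.
Qed.

Lemma Czpow_cis k t : Czpow (cis t) k = cis (IZR k * t).
Proof.
  destruct k as [|p|p]; unfold Czpow.
  - rewrite cis0; reflexivity.
  - rewrite Cpow_cis. f_equal. f_equal. rewrite INR_IZR_INZ, positive_nat_Z. reflexivity.
  - rewrite cis_inv, Cpow_cis. f_equal.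
    replace (Z.neg p) with (- Z.pos p)%Z by reflexivity.
    rewrite opp_IZR, INR_IZR_INZ, positive_nat_Z. ring.
Qed.

Lemma cis_int m : cis (IZR m * (2 * PI)) = C1.
Proof.
  rewrite <- Czpow_cis.
  replace (cis (2 * PI)) with (cis (0 * 0)).
  rewrite Czpow_cis. replace (IZR m * (0 * 0)) with (0 * 0) by ring. apply (cis0 0).
  unfold cis. rewrite Rmult_0_r, cos_2PI, sin_2PI, cos_0, sin_0. reflexivity.
Qed.

Lemma geom N phi : Cmul (Csub (cis phi) C1) (Csum N (fun k => cis (INR k * phi)))
                   = Csub (cis (INR N * phi)) C1.
Proof.
  induction N.
  - simpl Csum. simpl INR. rewrite cis0. ring.
  - cbn [Csum].
    transitivity (Cadd (Cmul (Csub (cis phi) C1) (Csum N (fun k => cis (INR k * phi))))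
                       (Cmul (Csub (cis phi) C1) (cis (INR N * phi)))). ring.
    rewrite IHN.
    replace (cis (INR (S N) * phi)) with (Cmul (cis phi) (cis (INR N * phi))).
    ring. rewrite cis_mul. f_equal. rewrite S_INR. ring.
Qed.

Lemma Cmul_zero_im (a w : C) : Cim a <> 0 -> Cmul a w = C0 -> w = C0.
Proof.
  destruct a as [p q], w as [x y]; unfold Cmul, C0; simpl; intros Hq H.
  injection H; intros H2 H1.
  assert (Hpos : p * p + q * q > 0) by nra.
  assert (Ex : (p * p + q * q) * x = 0).
  { transitivity (p * (p * x - q * y) + q * (p * y + q * x)). ring. rewrite H1, H2. ring. }
  assert (Ey : (p * p + q * q) * y = 0).
  { transitivity (p * (p * y + q * x) - q * (p * x - q * y)). ring. rewrite H1, H2. ring. }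
  apply Rmult_integral in Ex; apply Rmult_integral in Ey.
  destruct Ex; [lra|]; destruct Ey; [lra|]. subst. reflexivity.
Qed.

Lemma sum_ones n : Cre (Csum n (fun k => cis (INR k * 0))) = INR n.
Proof.
  induction n. reflexivity.
  cbn [Csum Cadd Cre]. rewrite IHn. unfold cis; simpl Cre. rewrite Rmult_0_r, cos_0.
  rewrite S_INR. ring.
Qed.

Lemma part2 (g : Z) : ~ K1_set g.
Proof.
  intro Hg. unfold K1_set, strictly_pos_def in Hg.
  set (G := Z.to_nat g). set (N := (4 * (G + 1))%nat). set (s := (Z.of_nat G + 1)%Z).
  set (a := 2 * PI / INR N).
  specialize (Hg N (fun k => cis (- (INR k * a) * IZR s)) (fun k _ => cis (INR k * a))).
  assert (HNpos : 0 < INR N) by (apply lt_0_INR; unfold N; lia).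
  assert (Tval : forall gamma : nat -> Z,
    trig_poly 1 N (fun k => cis (- (INR k * a) * IZR s)) (fun k _ => cis (INR k * a)) gamma
    = Csum N (fun k => cis (INR k * (a * (IZR (gamma 0%nat) - IZR s))))).
  { intro gamma. unfold trig_poly. apply Csum_ext_lt. intros k _.
    unfold character. cbn [Cprod]. rewrite Czpow_cis.
    replace (Cmul (cis (- (INR k * a) * IZR s)) (Cmul C1 (cis (IZR (gamma 0%nat) * (INR k * a)))))
      with (Cmul (cis (- (INR k * a) * IZR s)) (cis (IZR (gamma 0%nat) * (INR k * a)))) by ring.
    rewrite cis_mul. f_equal. ring. }
  assert (Hs := Hg (fun i _ k _ => cis_T (INR i * a))).
  assert (Hz : forall gamma, trig_poly 1 N (fun k => cis (- (INR k * a) * IZR s))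
                 (fun k _ => cis (INR k * a)) gamma = C0).
  { apply Hs. intros gamma HK. unfold K_set, pairZ in HK.
    destruct HK as [H1 [H2 H3]].
    rewrite Tval. set (w := gamma 0%nat) in *.
    set (phi := a * (IZR w - IZR s)).
    assert (Hg' : g = Z.of_nat G) by (unfold G; lia).
    assert (HIg : IZR g = INR G) by (rewrite Hg', INR_IZR_INZ; reflexivity).
    assert (Hw1 : IZR w <= INR G) by (rewrite <- HIg; apply IZR_le; lia).
    assert (Hw2 : - INR G <= IZR w) by (rewrite <- HIg, <- opp_IZR; apply IZR_le; lia).
    assert (HIs : IZR s = INR G + 1).
    { unfold s. rewrite plus_IZR, <- INR_IZR_INZ. reflexivity. }
    assert (HN : INR N = 4 * (INR G + 1)).
    { unfold N. rewrite mult_INR, plus_INR. simpl. ring. }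
    assert (HG0 : 0 <= INR G) by apply pos_INR.
    set (t := IZR w - IZR s) in *.
    assert (Hphi : phi * (2 * (INR G + 1)) = PI * t).
    { unfold phi, a. rewrite HN. field. lra. }
    assert (PI > 0) by apply PI_RGT_0.
    assert (Ht1 : t <= -1) by (unfold t; lra).
    assert (Ht2 : t + 2 * (INR G + 1) > 0) by (unfold t; lra).
    assert (HP : PI * (t + 2 * (INR G + 1)) > 0) by (apply Rmult_lt_0_compat; lra).
    assert (Hsin : sin phi < 0).
    { apply sin_lt_0_var; nra. }
    apply (Cmul_zero_im (Csub (cis phi) C1)).
    - unfold Csub, Cadd, Copp, cis, C1; simpl. lra.
    - rewrite geom.
      replace (INR N * phi) with (IZR (w - s) * (2 * PI)).
      rewrite cis_int. ring.
      unfold phi, a, t. rewrite minus_IZR. field. lra. }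
  specialize (Hz (fun _ => s)). rewrite Tval in Hz.
  replace (a * (IZR s - IZR s)) with 0 in Hz by ring.
  pose proof (sum_ones N) as Ho. rewrite Hz in Ho. simpl in Ho. lra.
Qed.

Theorem mainTheorem13 :
  strictly_pos_def 2 K_set /\ (forall g : Z, ~ K1_set g).
Proof.
  split. apply part1. apply part2.
Qed.
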